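(* Let $I\ge1$, $\varphi\ge0$, $\psi\in(0,\infty)^I$, $\boldsymbol\lambda=(\boldsymbol\lambda^{ji})\in(0,\infty)^{I\times I}$ with $\psi^i+\sum_j\boldsymbol\lambda^{ji}=1$ for all $i$. Let $\overline\delta\ge0$, $\overline\tau\in\mathbb R_+^I$ with $\overline\delta\max_i\overline\tau^i<1$, $\overline\zeta\in\mathbb R_+^{I\times I}$, $\overline\kappa\in\mathbb R_+^I$, and define $$\Psi^i:=\psi^i\frac{1-\overline\tau^i\overline\delta}{1+\overline\kappa^i\overline\delta},\qquad \Lambda^{ji}:=\boldsymbol\lambda^{ji}\frac{1-\overline\tau^i\overline\delta}{1+\overline\zeta^{ji}\overline\delta}\,\frac{1+\overline\kappa^j\overline\delta}{1+\overline\kappa^i\overline\delta}.$$ Let $A\in(0,\infty)^I$ and consider the system, for $(C,Y)\in(0,\infty)^I\times(0,\infty)^I$ and all $i$, $$Y^i=C^i+\sum_{j}\Lambda^{ij}\frac{C^i}{C^j}Y^j,\qquad Y^i=A^i\Big[\Psi^i\frac{Y^i}{C^i}\Big]^{\frac{\psi^i}{1+\varphi}}\prod_{j}\Big[\Lambda^{ji}C^j\frac{Y^i}{C^i}\Big]^{\boldsymbol\lambda^{ji}}.$$ Assume that the matrix $(\delta_{ij}-\Lambda^{ij})_{i,j}$ is nonsingular and that the unique vector $\mathfrak e\in\mathbb R^I$ with $\mathfrak e^i=1+\sum_j\Lambda^{ij}\mathfrak e^j$ for all $i$ has positive entries, and that the matrix $N:=(\delta_{ij}-\boldsymbol\lambda^{ji})_{i,j}$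 is nonsingular. Then the system has a unique solution $(C,Y)\in(0,\infty)^I\times(0,\infty)^I$; it satisfies $Y^i/C^i=\mathfrak e^i$ for all $i$, $$(\log C^i)_{i}=N^{-1}\big(\log A^i+\mathfrak v^i\big)_{i},\qquad \log Y^i=\log C^i+\log\mathfrak e^i,$$ where $\mathfrak v^i:=-\frac{\varphi\psi^i}{1+\varphi}\log\mathfrak e^i+\frac{\psi^i}{1+\varphi}\log\Psi^i+\sum_j\boldsymbol\lambda^{ji}\log\Lambda^{ji}$.
   Context: $\delta_{ij}$ is the Kronecker delta. The system is the market-equilibrium system of a multisectoral economy with logarithmic utility of consumption; $C^i$ is household consumption of good $i$, $Y^i$ output of sector $i$, $A^i$ total factor productivity of sector $i$. *)

(* Defs.v *)
From HB Require Import structures.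
From mathcomp Require Import all_boot all_order all_algebra.
From mathcomp Require Import boolp classical_sets reals exp.
Set Implicit Arguments. Unset Strict Implicit. Unset Printing Implicit Defensive.
Import Order.TTheory GRing.Theory Num.Theory.
Local Open Scope ring_scope.

Section Defs.
Variables (R : realType) (n : nat).

Definition PsiV (psi taubar kappabar : 'I_n -> R) (db : R) (i : 'I_n) : R :=
  psi i * ((1 - taubar i * db) / (1 + kappabar i * db)).

(* Lambda^{ji} = lam^{ji} (1 - taubar^i db)/(1 + zetabar^{ji} db)
                 * (1 + kappabar^j db)/(1 + kappabar^i db);
   matrices are stored so that  M j i  denotes  M^{ji}. *)
Definition LamM (lam zetabar : 'M[R]_n) (taubar kappabar : 'I_n -> R) (db : R)
  : 'M[R]_n :=
  \matrix_(j, i) (lam j i * ((1 - taubar i * db) / (1 + zetabar j i * db))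
                          * ((1 + kappabar j * db) / (1 + kappabar i * db))).

Definition eq_system (phi : R) (psi A : 'I_n -> R) (lam Lam : 'M[R]_n)
  (Psi : 'I_n -> R) (C Y : 'I_n -> R) : Prop :=
  forall i : 'I_n,
    Y i = C i + \sum_j Lam i j * (C i / C j) * Y j /\
    Y i = A i * (Psi i * (Y i / C i)) `^ (psi i / (1 + phi))
              * \prod_j (Lam j i * C j * (Y i / C i)) `^ (lam j i).

Definition vV (phi : R) (psi : 'I_n -> R) (lam Lam : 'M[R]_n)
  (Psi e : 'I_n -> R) (i : 'I_n) : R :=
  - (phi * psi i / (1 + phi)) * ln (e i) + psi i / (1 + phi) * ln (Psi i)
  + \sum_j lam j i * ln (Lam j i).

End Defs.

(* Main.v *)
Require Import Defs.
From HB Require Import structures.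
From mathcomp Require Import all_boot all_order all_algebra.
From mathcomp Require Import boolp classical_sets reals exp.
From mathcomp Require Import sequences ring lra.
Import Order.TTheory GRing.Theory Num.Theory.
Local Open Scope ring_scope.

Lemma ln_prod_pos (R : realType) (I : finType) (f : I -> R) :
  (forall j, 0 < f j) -> ln (\prod_j f j) = \sum_j ln (f j).
Proof.
move=> f0.
have := (@big_ind2 R R (fun x y => 0 < x /\ ln x = y) 1 *%R 0 +%R).
move=> /(_ _ _ I (index_enum I) xpredT f (fun j => ln (f j))) [] //.
- by rewrite ln1.
- move=> x1 x2 y1 y2 [x10 <-] [y10 <-]; split; first exact: mulr_gt0.
  by rewrite lnM // posrE.
Qed.

Lemma mx_delta_col (R : comRingType) (n : nat) (B : 'I_n -> 'I_n -> R)
  (f : 'I_n -> R) (i : 'I_n) :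
  ((\matrix_(i, j) ((i == j)%:R - B i j)) *m \col_j f j) i 0
  = f i - \sum_j B i j * f j.
Proof.
rewrite mxE.
under eq_bigr do rewrite !mxE mulrBl.
rewrite sumrB; congr (_ - _).
rewrite (bigD1 i) //= eqxx mul1r big1 ?addr0 // => j ji.
by rewrite eq_sym (negbTE ji) mul0r.
Qed.

Lemma key (R : realType) (n : nat) (phi : R) (psi A : 'I_n -> R)
  (lam Lam : 'M[R]_n) (Psi e C : 'I_n -> R) (i : 'I_n) :
  0 <= phi -> (forall j, 0 < C j) -> (forall j, 0 < e j) -> 0 < Psi i ->
  (forall j, 0 < Lam j i) -> 0 < A i ->
  psi i + \sum_j lam j i = 1 ->
  (C i * e i = A i * (Psi i * (C i * e i / C i)) `^ (psi i / (1 + phi))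
      * \prod_j (Lam j i * C j * (C i * e i / C i)) `^ (lam j i))
  <-> ln (C i) - \sum_j lam j i * ln (C j) = ln (A i) + vV phi psi lam Lam Psi e i.
Proof.
move=> phi0 C0 e0 Psi0 Lam0 A0 s1.
have -> : C i * e i / C i = e i by rewrite mulrAC mulfV ?gt_eqF // mul1r.
have hR : ln (A i * (Psi i * e i) `^ (psi i / (1 + phi))
      * \prod_j (Lam j i * C j * e i) `^ (lam j i))
   = ln (A i) + vV phi psi lam Lam Psi e i + \sum_j lam j i * ln (C j) + ln (e i).
  have pP : 0 < (Psi i * e i) `^ (psi i / (1 + phi)) by rewrite powR_gt0 ?mulr_gt0.
  have pQ : forall j, 0 < (Lam j i * C j * e i) `^ (lam j i).
    by move=> j; rewrite powR_gt0 // !mulr_gt0.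
  rewrite lnM ?posrE ?mulr_gt0 ?prodr_gt0 //.
  rewrite lnM ?posrE //.
  rewrite ln_prod_pos //.
  under eq_bigr => j _.
    rewrite ln_powR lnM ?posrE ?mulr_gt0 // lnM ?posrE //.
  over.
  rewrite ln_powR lnM ?posrE //.
  rewrite /vV.
  under eq_bigr do rewrite !mulrDr.
  rewrite !big_split /= -mulr_suml.
  have -> : \sum_j lam j i = 1 - psi i by rewrite -s1 addrC addKr.
  have h1 : 1 + phi != 0 by rewrite gt_eqF // ltr_pwDl.
  set a := ln (e i); set b := ln (Psi i).
  set s1' := \sum_(j < n) _; set s2' := \sum_(j < n) _.
  field; exact: h1.
have lhs : ln (C i * e i) = ln (C i) + ln (e i) by rewrite lnM ?posrE.
have pL : 0 < C i * e i by rewrite mulr_gt0.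
have pR : 0 < A i * (Psi i * e i) `^ (psi i / (1 + phi))
      * \prod_j (Lam j i * C j * e i) `^ (lam j i).
  rewrite !mulr_gt0 ?powR_gt0 ?prodr_gt0 ?mulr_gt0 //.
  by move=> j _; rewrite powR_gt0 // !mulr_gt0.
split.
- move=> h; move: (congr1 (@ln R) h); rewrite hR lhs => h2.
  apply/eqP; rewrite subr_eq; apply/eqP.
  by apply: (addIr (ln (e i))); rewrite h2.
- move=> h; apply: ln_inj; rewrite ?posrE // hR lhs -h.
  by rewrite subrK.
Qed.

Lemma col_unique (R : realType) (n : nat) (B : 'I_n -> 'I_n -> R) (w : 'I_n -> R)
  (d : 'I_n -> R) :
  (\matrix_(i, j) ((i == j)%:R - B i j)) \in unitmx ->
  (forall i, d i - \sum_j B i j * d j = w i) ->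
  \col_j d j = invmx (\matrix_(i, j) ((i == j)%:R - B i j)) *m \col_j w j.
Proof.
move=> U hd.
have h : (\matrix_(i, j) ((i == j)%:R - B i j)) *m \col_j d j = \col_j w j.
  by apply/matrixP => a b; rewrite (ord1 b) mx_delta_col hd mxE.
by rewrite -h mulKmx.
Qed.

Theorem mainTheorem5 (R : realType) (n : nat) (phi : R) (psi : 'I_n -> R)
  (lam : 'M[R]_n) (db : R) (taubar : 'I_n -> R) (zetabar : 'M[R]_n)
  (kappabar : 'I_n -> R) (A : 'I_n -> R) (e : 'I_n -> R) :
  (0 < n)%N ->
  0 <= phi ->
  (forall i, 0 < psi i) ->
  (forall j i, 0 < lam j i) ->
  (forall i, psi i + \sum_j lam j i = 1) ->
  0 <= db ->
  (forall i, 0 <= taubar i) ->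
  db * \big[Num.max/0]_(i < n) taubar i < 1 ->
  (forall j i, 0 <= zetabar j i) ->
  (forall i, 0 <= kappabar i) ->
  (forall i, 0 < A i) ->
  let Psi := PsiV psi taubar kappabar db in
  let Lam := LamM lam zetabar taubar kappabar db in
  (\matrix_(i, j) ((i == j)%:R - Lam i j)) \in unitmx ->
  (forall i, e i = 1 + \sum_j Lam i j * e j) ->
  (forall i, 0 < e i) ->
  let N := \matrix_(i, j) ((i == j)%:R - lam j i) in
  N \in unitmx ->
  exists C Y : 'I_n -> R,
    ((forall i, 0 < C i) /\ (forall i, 0 < Y i)) /\
        eq_system phi psi A lam Lam Psi C Y /\
        (forall C' Y' : 'I_n -> R,
            (forall i, 0 < C' i) -> (forall i, 0 < Y' i) ->
            eq_system phi psi A lam Lam Psi C' Y' -> C' = C /\ Y' = Y) /\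
        (forall i, Y i / C i = e i) /\
        \col_i ln (C i) =
          invmx N *m \col_i (ln (A i) + vV phi psi lam Lam Psi e i)
      /\ (forall i, ln (Y i) = ln (C i) + ln (e i)).
Proof.
move=> n0 phi0 psi0 lam0 sum1 db0 tau0 dbmax zeta0 kap0 A0 Psi Lam Munit eeq e0
  N Nunit.
have tau1 : forall i, 0 < 1 - taubar i * db.
  move=> i.
  have h : taubar i * db <= (\big[Num.max/0]_(i < n) taubar i) * db.
    by rewrite ler_wpM2r // le_bigmax.
  rewrite mulrC in h; rewrite mulrC; lra.
have kp : forall i, 0 < 1 + kappabar i * db.
  by move=> i; have := mulr_ge0 (kap0 i) db0; lra.
have zp : forall j i, 0 < 1 + zetabar j i * db.
  by move=> j i; have := mulr_ge0 (zeta0 j i) db0; lra.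
have Psi0 : forall i, 0 < Psi i.
  by move=> i; rewrite /Psi /PsiV mulr_gt0 ?divr_gt0.
have Lam0 : forall j i, 0 < Lam j i.
  by move=> j i; rewrite /Lam /LamM mxE !mulr_gt0 ?invr_gt0.
set v := fun i => ln (A i) + vV phi psi lam Lam Psi e i.
have Uv : forall d : 'I_n -> R, (forall i, d i - \sum_j lam j i * d j = v i) ->
    \col_j d j = invmx N *m \col_j v j.
  move=> d hd; rewrite /N.
  apply: (col_unique _ _ (fun i j => lam j i)) => //.
set c := invmx N *m \col_j v j.
have cE : forall i, c i 0 - \sum_j lam j i * c j 0 = v i.
  have Nc : N *m c = \col_j v j by rewrite mulKVmx.
  have cc : c = \col_j c j 0 by apply/matrixP => a b; rewrite mxE (ord1 b).
  move=> i; have := congr1 (fun M : 'M[R]_(n, 1) => M i 0) Nc.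
  rewrite {1}cc /N (mx_delta_col _ _ (fun i j => lam j i)) mxE => ->.
  by rewrite mxE.
have Ue : forall x : 'I_n -> R, (forall i, x i = 1 + \sum_j Lam i j * x j) ->
    x = e.
  move=> x hx.
  have h : \col_j (x j - e j) = invmx (\matrix_(i, j) ((i == j)%:R - Lam i j))
             *m \col_j (0 : R).
    apply: col_unique => // i /=.
    under eq_bigr do rewrite mulrBr.
    rewrite sumrB; have := hx i; have := eeq i; lra.
  have h0 : \col_j (0 : R) = 0 :> 'M[R]_(n, 1).
    by apply/matrixP => a b; rewrite !mxE.
  rewrite h0 mulmx0 in h.
  apply: funext => i; have := congr1 (fun M : 'M[R]_(n, 1) => M i 0) h.
  by rewrite !mxE => /eqP; rewrite subr_eq0 => /eqP.
set C := fun i => expR (c i 0).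
have C0 : forall i, 0 < C i by move=> i; exact: expR_gt0.
have lnC : forall i, ln (C i) = c i 0 by move=> i; rewrite /C expRK.
exists C, (fun i => C i * e i).
have sysE : forall C' : 'I_n -> R, (forall i, 0 < C' i) ->
    (eq_system phi psi A lam Lam Psi C' (fun i => C' i * e i) <->
     forall i, ln (C' i) - \sum_j lam j i * ln (C' j) = v i).
  move=> C' C'0; split.
  - move=> hs i; apply: (key _ _ _ _ _ _ _ _ _ _ _ phi0 C'0 e0 (Psi0 i) (fun j => Lam0 j i)
      (A0 i) (sum1 i)).1.
    exact: (hs i).2.
  - move=> hl i; split.
      rewrite (eeq i) mulrDr mulr1 mulr_sumr; congr (_ + _).
      apply: eq_bigr => j _; field.
      by rewrite gt_eqF.
    apply: (key _ _ _ _ _ _ _ _ _ _ _ phi0 C'0 e0 (Psi0 i) (fun j => Lam0 j i)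
      (A0 i) (sum1 i)).2.
    exact: hl.
split; first by split => // i; rewrite mulr_gt0.
split.
  by apply/sysE => // i; under eq_bigr do rewrite lnC; rewrite lnC; exact: cE.
split.
  move=> C' Y' C'0 Y'0 hs.
  have xe : (fun i => Y' i / C' i) = e.
    apply: Ue => i.
    have h1 := (hs i).1.
    have h2 : \sum_j Lam i j * (C' i / C' j) * Y' j =
              C' i * \sum_j Lam i j * (Y' j / C' j).
      rewrite mulr_sumr; apply: eq_bigr => j _; field.
      by rewrite gt_eqF.
    rewrite {1}h1 h2 mulrDl divff ?gt_eqF //.
    by rewrite mulrAC divff ?gt_eqF // mul1r.
  have YE : Y' = (fun i => C' i * e i).
    apply: funext => i; have := congr1 (fun f => f i) xe => /= <-.
    by rewrite mulrC divfK // gt_eqF.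
  subst Y'.
  have hl := (sysE C' C'0).1 hs.
  have cc := Uv _ hl.
  have CE : C' = C.
    apply: funext => i; have := congr1 (fun M : 'M[R]_(n, 1) => M i 0) cc.
    rewrite mxE => h; rewrite /C -/c -h lnK // posrE; exact: C'0.
  by rewrite CE.
split.
  by move=> i; rewrite mulrAC divff ?gt_eqF // mul1r.
split.
  by apply/matrixP => a b; rewrite mxE (ord1 b) lnC.
by move=> i; rewrite lnM // posrE.
Qed.
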